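(* Let $\varepsilon\in(0,1/2)$ and consider two arms with independent priors: $\mu_1=\tfrac12+\varepsilon$ or $\mu_1=\tfrac12-\varepsilon$ each with probability $1/2$, and $\mu_2=\tfrac12-\tfrac{\varepsilon^2}{10}$ almost surely. Then (i) there is a BIC algorithm which almost surely chooses both arms within $O(1)$ rounds (an absolute constant number of rounds); and (ii) there is an absolute constant $c>0$ such that if some BIC algorithm almost surely uses Thompson sampling at round $t$, i.e. $\Pr[A_t=i\mid\mathcal F_t]=\Pr[A^*=i\mid\mathcal F_t]$ almost surely for $i=1,2$, then $t\geq c/\varepsilon$.
   Context: Incentivized exploration model with Bernoulli rewards: given the means, each arm $i$ has an i.i.d. $\{0,1\}$ sample sequence with mean $\mu_i$, the $n$-th choice of arm $i$ revealing its $n$-th sample. Each round the algorithm recommends $A_t$, the agent chooses $A'_t$, and the reward is observed by the algorithm only. With $\mathcal E_{t-1}=\{A'_s=A_s\ \forall s<t\}$, the algorithm is BIC if $\mathbb E[\mu_i-\mu_j\mid A_t=i,\mathcal E_{t-1}]\geq0$ for all rounds $t$ and arms $i,j$ with $\Pr[A_t=i]>0$. $\mathcal F_t$ is the $\sigma$-algebra generated by chosen arms and rewards before round $t$; $A^*=\min(\arg\max_j\mu_j)$. *)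

(* Defs.v *)
From HB Require Import structures.
From mathcomp Require Import all_boot all_order all_algebra.
From mathcomp Require Import reals.
Set Implicit Arguments. Unset Strict Implicit. Unset Printing Implicit Defensive.
Import Order.TTheory GRing.Theory Num.Theory.
Local Open Scope ring_scope.

(* Arms: [true] = arm 1, [false] = arm 2.
   Prior parameter theta : bool, each with probability 1/2:
   theta = true  <-> mu_1 = 1/2 + eps,  theta = false <-> mu_1 = 1/2 - eps;
   mu_2 = 1/2 - eps^2/10 deterministically. *)
Definition arm := bool.

Section Model.
Variable R : realType.

Definition mu (eps : R) (theta : bool) (a : arm) : R :=
  if a then (if theta then 1/2 + eps else 1/2 - eps) else 1/2 - eps ^+ 2 / 10.

Definition prior (theta : bool) : R := 1/2.

Definition best_arm (eps : R) (theta : bool) : arm :=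
  mu eps theta true >= mu eps theta false.

(* History: chronological list of (chosen arm, observed reward). *)
Definition history := seq (arm * bool).

(* A (randomized) algorithm, in behavioural form: given the history F_t
   it recommends arm 1 with probability [pi h] and arm 2 otherwise.
   Since agents comply (event E_{t-1}), the chosen arm is the recommended one. *)
Definition policy := history -> R.

Definition valid_policy (pi : policy) : Prop := forall h, 0 <= pi h <= 1.

Definition prob_arm (pi : policy) (h : history) (a : arm) : R :=
  if a then pi h else 1 - pi h.

Definition bern (m : R) (r : bool) : R := if r then m else 1 - m.

Fixpoint hist_prob_aux (pi : policy) (eps : R) (theta : bool)
    (past : history) (h : history) : R :=
  match h with
  | [::] => 1
  | (a, r) :: h' => prob_arm pi past a * bern (mu eps theta a) r *
                    hist_prob_aux pi eps theta (rcons past (a, r)) h'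
  end.

Definition joint (pi : policy) (eps : R) (theta : bool) (h : history) : R :=
  prior theta * hist_prob_aux pi eps theta [::] h.

Definition hprob (pi : policy) (eps : R) (h : history) : R :=
  \sum_(theta : bool) joint pi eps theta h.

(* Round t >= 1 is played after a history of length t-1 = n. *)
Definition pr_rec (pi : policy) (eps : R) (n : nat) (i : arm) : R :=
  \sum_(theta : bool) \sum_(h : n.-tuple (arm * bool))
     joint pi eps theta h * prob_arm pi h i.

Definition cond_gap (pi : policy) (eps : R) (n : nat) (i j : arm) : R :=
  (\sum_(theta : bool) \sum_(h : n.-tuple (arm * bool))
     joint pi eps theta h * prob_arm pi h i * (mu eps theta i - mu eps theta j))
  / pr_rec pi eps n i.

Definition BIC (pi : policy) (eps : R) : Prop :=
  forall (t : nat) (i j : arm), (0 < t)%N ->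
    0 < pr_rec pi eps t.-1 i -> 0 <= cond_gap pi eps t.-1 i j.

Definition post_best (pi : policy) (eps : R) (h : history) (i : arm) : R :=
  (\sum_(theta : bool) joint pi eps theta h * (best_arm eps theta == i)%:R)
  / hprob pi eps h.

Definition thompson_at (pi : policy) (eps : R) (t : nat) : Prop :=
  forall (h : (t.-1).-tuple (arm * bool)), 0 < hprob pi eps h ->
    forall i : arm, prob_arm pi h i = post_best pi eps h i.

Definition pr_both_within (pi : policy) (eps : R) (N : nat) : R :=
  \sum_(h : N.-tuple (arm * bool))
    hprob pi eps h * ((true \in map fst h) && (false \in map fst h))%:R.

End Model.

(* Main.v *)
Require Import Defs.
From HB Require Import structures.
From mathcomp Require Import all_boot all_order all_algebra.
From mathcomp Require Import reals.
From mathcomp Require Import ring lra.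
Import Order.TTheory GRing.Theory Num.Theory.
Local Open Scope ring_scope.
Set Implicit Arguments. Unset Strict Implicit. Unset Printing Implicit Defensive.

Lemma sum_tupleS (R : realType) (X : finType) n (F : seq X -> R) :
  \sum_(h : n.+1.-tuple X) F h = \sum_(x : X) \sum_(h : n.-tuple X) F (x :: h).
Proof.
rewrite pair_bigA /=.
rewrite (reindex (fun p : X * n.-tuple X => [tuple of p.1 :: p.2])) //=.
exists (fun t : n.+1.-tuple X => (thead t, [tuple of behead t])).
  by move=> [x t] _ /=; congr (_, _); apply: val_inj.
by move=> t _; case/tupleP: t => x t; apply: val_inj.
Qed.

Lemma sum_tuple0 (R : realType) (X : finType) (F : seq X -> R) :
  \sum_(h : 0.-tuple X) F h = F [::].
Proof.
rewrite (big_pred1 [tuple]) // => t /=; apply/esym/eqP; apply: val_inj; by case: t => [[]].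
Qed.

Lemma sum_tupleSr (R : realType) (X : finType) n (F : seq X -> R) :
  \sum_(h : n.+1.-tuple X) F h = \sum_(h : n.-tuple X) \sum_(x : X) F (rcons h x).
Proof.
elim: n F => [|n IH] F.
  rewrite sum_tupleS (sum_tuple0 (fun s => \sum_x F (rcons s x))).
  apply: eq_bigr => x _.
  by rewrite (sum_tuple0 (fun s => F (x :: s))).
rewrite sum_tupleS (sum_tupleS _ (fun s => \sum_x F (rcons s x))).
apply: eq_bigr => x _.
by rewrite (IH (fun s => F (x :: s))).
Qed.

Lemma sum_pair (R : realType) (F : bool * bool -> R) :
  \sum_(x : bool * bool) F x = F (true,true) + F (true,false) + (F (false,true) + F (false,false)).
Proof.
transitivity (\sum_(p : bool * bool) (fun a b => F (a,b)) p.1 p.2).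
  by apply: eq_bigr => -[].
by rewrite -(pair_bigA _ (fun a b => F (a,b))) !big_bool /=.
Qed.

Section S.
Variable R : realType.
Variables (eps : R) (pi : policy R).

Lemma hp_rcons th past h x :
  hist_prob_aux pi eps th past (rcons h x) =
  hist_prob_aux pi eps th past h *
    (prob_arm pi (past ++ h) x.1 * bern (mu eps th x.1) x.2).
Proof.
elim: h past => [|[a r] h IH] past /=.
  by case: x => a r /=; rewrite cats0 mulr1 mul1r.
by rewrite IH cat_rcons !mulrA.
Qed.

Lemma hp_sum1 th n past :
  \sum_(h : n.-tuple (arm * bool)) hist_prob_aux pi eps th past h = 1.
Proof.
elim: n past => [|n IH] past; first by rewrite sum_tuple0.
rewrite sum_tupleS.
have E : forall x : arm * bool,
  \sum_(h : n.-tuple (arm * bool)) hist_prob_aux pi eps th past (x :: h)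
  = prob_arm pi past x.1 * bern (mu eps th x.1) x.2.
  move=> [a r] /=; by rewrite -mulr_sumr IH mulr1.
rewrite (eq_bigr _ (fun x _ => E x)).
rewrite sum_pair /prob_arm /bern /=; ring.
Qed.

End S.

Lemma lemA (R : realType) (x y s : R) :
  (x * s) ^+ 2 / (x * s + y * s) = s * (x ^+ 2 / (x + y)).
Proof.
have [->|s0] := eqVneq s 0; first by rewrite !mulr0 add0r expr0n /= mul0r mul0r.
rewrite -mulrDl.
have [tf|tf] := eqVneq (x + y) 0; first by rewrite tf mul0r !invr0 !mulr0.
by field; apply/andP.
Qed.

Lemma lemA2 (R : realType) (x y s a b : R) :
  (x * (s * a)) ^+ 2 / (x * (s * a) + y * (s * b)) = s * ((x * a) ^+ 2 / (x * a + y * b)).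
Proof.
have -> : x * (s * a) = (x * a) * s by ring.
have -> : y * (s * b) = (y * b) * s by ring.
exact: lemA.
Qed.

Lemma lemC (R : realType) (T F e : R) : 0 <= T -> 0 <= F -> 0 < e < 1/2 ->
  (T * (1/2 + e)) ^+ 2 / (T * (1/2 + e) + F * (1/2 - e))
  + (T * (1/2 - e)) ^+ 2 / (T * (1/2 - e) + F * (1/2 + e))
  <= T ^+ 2 / (T + F) + 4 * e ^+ 2 * (T + F).
Proof.
move=> T0 F0 /andP[e0 e1].
have [->|Tp] := eqVneq T 0.
  rewrite !mul0r expr0n /= !mul0r !add0r; apply: mulr_ge0 => //.
  by apply: mulr_ge0 => //; rewrite exprn_ge0 // ltW.
have Tpos : 0 < T by rewrite lt_def Tp T0.
set D1 := T * (1/2 + e) + F * (1/2 - e).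
set D0 := T * (1/2 - e) + F * (1/2 + e).
have D1p : 0 < D1 by rewrite /D1; nra.
have D0p : 0 < D0 by rewrite /D0; nra.
have TFp : 0 < T + F by lra.
have Hid : (T * (1/2 + e)) ^+ 2 / D1 + (T * (1/2 - e)) ^+ 2 / D0
   = T ^+ 2 / (T + F) + 4 * e ^+ 2 * (T ^+ 2 * F ^+ 2 / ((T + F) * D1 * D0)).
  move: (lt0r_neq0 D1p) (lt0r_neq0 D0p) (lt0r_neq0 TFp).
  rewrite /D1 /D0 => n1 n0 n2.
  field. by apply/and3P; split; apply: lt0r_neq0; nra.
rewrite Hid lerD2l; apply: ler_wpM2l; first by apply: mulr_ge0 => //; rewrite exprn_ge0 // ltW.
rewrite ler_pdivrMr; last by rewrite !mulr_gt0.
have h1 : T * F / 4 <= D1 * D0.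
  have a1 : T / 2 <= D1 by rewrite /D1; nra.
  have a0 : F / 2 <= D0 by rewrite /D0; nra.
  have -> : T * F / 4 = (T / 2) * (F / 2) by field.
  by apply: ler_pM => //; rewrite divr_ge0.
have h2 : 4 * (T * F) <= (T + F) ^+ 2.
  rewrite -subr_ge0; have -> : (T+F)^+2 - 4*(T*F) = (T-F)^+2 by ring.
  exact: sqr_ge0.
have -> : (T + F) * ((T + F) * D1 * D0) = (T + F) ^+ 2 * (D1 * D0) by ring.
have -> : T ^+ 2 * F ^+ 2 = (4 * (T * F)) * (T * F / 4) by field.
apply: ler_pM => //; first by nra.
by rewrite divr_ge0 // mulr_ge0.
Qed.

Section S2.
Variable R : realType.
Variables (eps : R) (pi : policy R).
Hypothesis Hv : valid_policy pi.
Hypothesis He : 0 < eps < 1/2.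

Lemma bern_ge0 th a r : 0 <= bern (mu eps th a) r.
Proof. case/andP: He => e0 e1; by case: th; case: a; case: r; rewrite /bern /mu /=; nra. Qed.

Lemma prob_arm_ge0 h a : 0 <= prob_arm pi h a.
Proof. by case: (Hv h) => /andP[h0 h1]; case: a; rewrite /prob_arm //= subr_ge0. Qed.

Lemma hp_ge0 th past h : 0 <= hist_prob_aux pi eps th past h.
Proof.
elim: h past => [|[a r] h IH] past /=; first exact: ler01.
by rewrite !mulr_ge0 // ?prob_arm_ge0 ?bern_ge0.
Qed.

Definition JT h := hist_prob_aux pi eps true [::] h.
Definition JF h := hist_prob_aux pi eps false [::] h.
Definition Q h := JT h ^+ 2 / (JT h + JF h).

Lemma Q_step h :
  \sum_(x : arm * bool) Q (rcons h x) <= Q h + 4 * eps ^+ 2 * (JT h + JF h).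
Proof.
rewrite sum_pair /Q /JT /JF !hp_rcons /= !lemA2.
rewrite /prob_arm /bern /mu /=.
set T := hist_prob_aux pi eps true [::] h.
set F := hist_prob_aux pi eps false [::] h.
set p := pi h.
set m2 := 1/2 - eps ^+ 2 / 10.
rewrite !lemA.
have C := lemC (hp_ge0 true [::] h) (hp_ge0 false [::] h) He.
have -> : 1 - (1/2 + eps) = 1/2 - eps by lra.
have -> : 1 - (1/2 - eps) = 1/2 + eps by lra.
have /andP[p0 p1] := Hv h.
rewrite -/T -/F in C.
set q := T ^+ 2 / (T + F) in C *.
set D := 4 * eps ^+ 2 * (T + F) in C *.
have D0 : 0 <= D.
  apply: mulr_ge0; first by apply: mulr_ge0 => //; exact: sqr_ge0.
  exact: addr_ge0 (hp_ge0 _ _ _) (hp_ge0 _ _ _).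
have C' := ler_wpM2l p0 C.
have pD : p * D <= D by rewrite ler_piMl.
rewrite -mulrDr.
have -> : (1 - p) * (m2 * q) + (1 - p) * ((1 - m2) * q) = (1 - p) * q by ring.
move: C'; rewrite -/p mulrDr; lra.
Qed.


Lemma V_bound n :
  \sum_(h : n.-tuple (arm * bool)) Q h <= 1/2 + 8 * eps ^+ 2 * n%:R.
Proof.
elim: n => [|n IH].
  by rewrite (sum_tuple0 Q) /Q /JT /JF /= mulr0 addr0 expr1n.
rewrite (sum_tupleSr _ Q).
apply: le_trans; first by apply: ler_sum => h _; exact: Q_step.
rewrite big_split /= -mulr_sumr big_split /=.
rewrite /JT /JF !hp_sum1.
rewrite (_ : 8 * eps ^+ 2 * n.+1%:R = 8 * eps ^+ 2 * n%:R + 8 * eps ^+ 2); last first.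
  by rewrite -addn1 natrD; ring.
move: IH; set E := eps ^+ 2; set W := 8 * E * n%:R; lra.
Qed.

Lemma best_true : best_arm eps true = true.
Proof. case/andP: He => e0 e1; rewrite /best_arm /mu; apply/idP; nra. Qed.

Lemma best_false : best_arm eps false = false.
Proof. case/andP: He => e0 e1; rewrite /best_arm /mu; apply/negbTE; rewrite -ltNge; nra. Qed.

Lemma hprobE h : hprob pi eps h = 1/2 * JT h + 1/2 * JF h.
Proof. by rewrite /hprob big_bool /joint /prior. Qed.

Lemma thompson_pt t (Th : thompson_at pi eps t) (h : (t.-1).-tuple (arm * bool)) :
  JT h * (1 - pi h) = JT h - Q h /\ JF h * (1 - pi h) = JF h - JT h + Q h.
Proof.
have T0 := hp_ge0 true [::] h; have F0 := hp_ge0 false [::] h.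
rewrite -/(JT h) -/(JF h) in T0 F0.
rewrite /Q.
have [TF0|TFn] := eqVneq (JT h + JF h) 0.
  have T00 : JT h = 0 by lra.
  have F00 : JF h = 0 by lra.
  by rewrite TF0 T00 F00 invr0 !mulr0 !mul0r subr0 addr0.
have hp : 0 < hprob pi eps h.
  rewrite hprobE; have : 0 < JT h + JF h by rewrite lt_def TFn addr_ge0.
  lra.
have := Th h hp true; rewrite /prob_arm /post_best big_bool best_true best_false /=.
rewrite -/(hprob pi eps h) hprobE /joint /prior -/(JT h) -/(JF h) => ->.
rewrite mulr1 mulr0 addr0.
split; field; move: TFn; apply: contra => /eqP H; apply/eqP; lra.
Qed.

End S2.

Lemma partii (R : realType) (eps : R) (pi : policy R) :
  0 < eps < 1/2 -> valid_policy pi -> BIC pi eps ->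
  forall t : nat, (0 < t)%N -> thompson_at pi eps t -> (1/160) / eps <= t%:R.
Proof.
move=> He Hv Hb t t0 Th.
set n := t.-1.
set V := \sum_(h : n.-tuple (arm * bool)) Q eps pi h.
have ET : forall h : n.-tuple (arm * bool),
   1/2 * hist_prob_aux pi eps true [::] h * (1 - pi h) = 1/2 * (JT eps pi h - Q eps pi h).
  by move=> h; rewrite -(proj1 (thompson_pt Hv He Th h)) -mulrA.
have EF : forall h : n.-tuple (arm * bool),
   1/2 * hist_prob_aux pi eps false [::] h * (1 - pi h) = 1/2 * (JF eps pi h - JT eps pi h + Q eps pi h).
  by move=> h; rewrite -(proj2 (thompson_pt Hv He Th h)) -mulrA.
have Hpr : pr_rec pi eps n false = 1/2.
  rewrite /pr_rec big_bool /joint /prior /prob_arm /=.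
  rewrite (eq_bigr _ (fun h _ => ET h)) (eq_bigr _ (fun h _ => EF h)).
  rewrite -!mulr_sumr !sumrB big_split /= sumrB /JT /JF !hp_sum1 -/V.
  lra.
have := Hb t false true t0; rewrite -/n Hpr => /(_ ltac:(lra)).
rewrite /cond_gap Hpr big_bool /joint /prior /prob_arm /mu /=.
rewrite -!mulr_suml (eq_bigr _ (fun h _ => ET h)) (eq_bigr _ (fun h _ => EF h)).
rewrite -!mulr_sumr !sumrB big_split /= sumrB /JT /JF !hp_sum1 -/V.
set X := (X in X / (1/2)).
have -> : X / (1/2) = 2 * X by field.
rewrite /X => H1.
have /andP[e0 e1] := He.
have HV : V <= 1/2 + 8 * eps ^+ 2 * n%:R by exact: V_bound.
have H2 : eps * V <= eps * (1/2 + 8 * eps ^+ 2 * n%:R) by rewrite ler_wpM2l // ltW.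
have H3 : 0 <= eps ^+ 2 * (16 * (eps * n%:R) - 1/10).
  move: H1 H2; set W := eps * V; move=> H1 H2.
  have -> : eps ^+ 2 * (16 * (eps * n%:R) - 1/10) = 2 * (eps * (1/2 + 8 * eps ^+ 2 * n%:R)) - eps - eps ^+ 2 / 10 by field.
  have E2 : 2 * (1 / 2 * (1 - V) * (1 / 2 - eps ^+ 2 / 10 - (1 / 2 + eps)) +
     1 / 2 * (1 - 1 + V) * (1 / 2 - eps ^+ 2 / 10 - (1 / 2 - eps))) = 2 * W - eps - eps ^+ 2 / 10.
    by rewrite /W; field; lra.
  rewrite E2 in H1; lra.
have H4 : 0 <= 16 * (eps * n%:R) - 1/10.
  by move: H3; rewrite pmulr_rge0 // exprn_gt0.
have tE : t%:R = n%:R + 1 :> R by rewrite /n natr1 prednK.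
rewrite ler_pdivrMr // tE.
lra.
Qed.

Section P1.
Variable R : realType.
Variable eps : R.
Hypothesis He : 0 < eps < 1/2.

Definition mypi : policy R := fun h =>
  match h with
  | [::] => 1
  | (_, r1) :: rest => if ~~ r1 then 0 else
      match rest with
      | [::] => 1/2
      | [:: (a2, _)] => if a2 then 0 else 1
      | _ => 1
      end
  end.

Lemma mypi_valid : valid_policy mypi.
Proof.
move=> [|[a r] rest] /=; first by apply/andP; split; lra.
case: r => /=; last by apply/andP; split; lra.
case: rest => [|[b s] [|z l]] /=; try by apply/andP; split; lra.
by case: b; apply/andP; split; lra.
Qed.

Lemma hprob_sum1 n : \sum_(h : n.-tuple (arm * bool)) hprob mypi eps h = 1.
Proof.
rewrite /hprob exchange_big big_bool /= /joint /prior -!mulr_sumr !hp_sum1; lra.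
Qed.

Lemma part_both : pr_both_within mypi eps 3 = 1.
Proof.
rewrite /pr_both_within -[RHS](hprob_sum1 3); apply: eq_bigr => h _.
case: h => -[|x [|y [|z [|w l]]]] //= _.
case: x => [[] []]; case: y => [[] []]; case: z => [[] []];
  rewrite /= ?mulr1 //= /hprob big_bool /joint /prior /prob_arm /=;
  rewrite ?(subrr, mulr0, mul0r, addr0) //.
Qed.


Definition Gn th i j (s : seq (arm * bool)) :=
  joint mypi eps th s * prob_arm mypi s i * (mu eps th i - mu eps th j).

Lemma inner_long th k x i j :
  \sum_(h : k.+2.-tuple (arm * bool)) Gn th i j (x :: h)
  = prior R th * (prob_arm mypi [::] x.1 * bern (mu eps th x.1) x.2)
    * prob_arm (fun _ => if x.2 then 1 else 0) [::] i * (mu eps th i - mu eps th j).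
Proof.
rewrite (eq_bigr (fun h : k.+2.-tuple (arm * bool) =>
   prior R th * (prob_arm mypi [::] x.1 * bern (mu eps th x.1) x.2)
    * prob_arm (fun _ => if x.2 then 1 else 0) [::] i * (mu eps th i - mu eps th j)
    * hist_prob_aux mypi eps th [:: x] h)).
  by rewrite -mulr_sumr hp_sum1 mulr1.
move=> [[|y [|z l]] sz] _ //=; clear sz.
case: x => a r; rewrite /Gn /joint /=.
case: y => b s; case: z => c u.
by case: r; case: a; case: b; case: c; case: i; rewrite /prob_arm /=; ring.
Qed.

Lemma num_long th k i j :
  \sum_(h : k.+3.-tuple (arm * bool)) Gn th i j h
  = \sum_(x : arm * bool) prior R th * (prob_arm mypi [::] x.1 * bern (mu eps th x.1) x.2)
    * prob_arm (fun _ => if x.2 then 1 else 0) [::] i * (mu eps th i - mu eps th j).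
Proof.
rewrite (sum_tupleS _ (Gn th i j)); apply: eq_bigr => x _; exact: inner_long.
Qed.

Lemma num2 th i j :
  \sum_(h : 2.-tuple (arm * bool)) Gn th i j h
  = \sum_(x : arm * bool) \sum_(y : arm * bool) Gn th i j [:: x; y].
Proof.
rewrite (sum_tupleS _ (Gn th i j)); apply: eq_bigr => x _.
rewrite (sum_tupleS _ (fun s => Gn th i j (x :: s))); apply: eq_bigr => y _.
by rewrite (sum_tuple0 (fun s => Gn th i j [:: x, y & s])).
Qed.

Lemma num1 th i j :
  \sum_(h : 1.-tuple (arm * bool)) Gn th i j h
  = \sum_(x : arm * bool) Gn th i j [:: x].
Proof.
rewrite (sum_tupleS _ (Gn th i j)); apply: eq_bigr => x _.
by rewrite (sum_tuple0 (fun s => Gn th i j (x :: s))).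
Qed.

Lemma num_ge0 n i j :
  0 <= \sum_(th : bool) \sum_(h : n.-tuple (arm * bool)) Gn th i j h.
Proof.
have /andP[e0 e1] := He.
case: n => [|[|[|k]]].
- rewrite big_bool !(sum_tuple0 (Gn _ i j)) /Gn /joint /prior /prob_arm /mu /=.
  case: i; case: j => /=; nra.
- rewrite big_bool !num1 !sum_pair /Gn /joint /prior /prob_arm /bern /mu /=.
  case: i; case: j => /=; nra.
- rewrite big_bool !num2 !sum_pair /Gn /joint /prior /prob_arm /bern /mu /=.
  case: i; case: j => /=; nra.
- rewrite big_bool !num_long !sum_pair /Gn /joint /prior /prob_arm /bern /mu /=.
  case: i; case: j => /=; nra.
Qed.

End P1.

Unset Implicit Arguments.

Theorem propositionD5 (R : realType) :
  (exists N : nat, forall eps : R, 0 < eps < 1/2 ->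
     exists pi : policy R, valid_policy pi /\ BIC pi eps /\
       pr_both_within pi eps N = 1)
  /\
  (exists c : R, 0 < c /\ forall eps : R, 0 < eps < 1/2 ->
     forall pi : policy R, valid_policy pi -> BIC pi eps ->
     forall t : nat, (0 < t)%N -> thompson_at pi eps t -> c / eps <= t%:R).
Proof.
split.
  exists 3%N => eps He; exists (@mypi R); split; first exact: mypi_valid.
  split; last exact: part_both.
  move=> t i j t0 hp; rewrite /cond_gap; apply: divr_ge0; last exact: ltW.
  exact: (num_ge0 He).
exists (1/160); split; first by rewrite divr_gt0.
move=> eps He pi Hv Hb t t0 Th; exact: partii.
Qed.
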